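(* Let $k$ be a field, $D$ a $k$-algebra, $D[x,y]$ the polynomial algebra in two commuting indeterminates over $D$, $a$ a central element of $D$, and $I$ the ideal of $D[x,y]$ generated by $xy-a$. Then $\operatorname{GKdim}(D[x,y]/I)=\operatorname{GKdim}(D)+1$.
   Context: $\operatorname{GKdim}(B)=\sup_V\limsup_{n\to\infty}\log_n\dim_k(\sum_{i=0}^nV^i)$ over finite-dimensional subspaces $V$ of $B$. In $D[x,y]$ the indeterminates $x,y$ commute with each other and with all elements of $D$. *)

(* Defs.v *)
From HB Require Import structures.
From mathcomp Require Import all_boot all_order all_algebra.
From mathcomp Require Import boolp classical_sets reals ereal sequences exp.
Set Implicit Arguments. Unset Strict Implicit. Unset Printing Implicit Defensive.
Import Order.TTheory GRing.Theory Num.Theory.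
Local Open Scope ring_scope.

(* A k-algebra B is presented as a quotient A / I of a ring A by a two-sided
   ideal I, with the k-structure given by a map f : k -> A (scalar c acts
   as multiplication by f c).  For B = A itself take I = {0}. *)
Section GK.
Variables (R : realType) (k : fieldType) (A : nzRingType).
Variables (f : k -> A) (I : A -> Prop).

Definition lin_indep_mod (s : seq A) : Prop :=
  forall c : 'I_(size s) -> k,
    I (\sum_(i < size s) f (c i) * s`_i) -> forall i, c i = 0.

Definition dim_span_mod (s : seq A) : nat :=
  \max_(m : (size s).-tuple bool | `[< lin_indep_mod (mask m s) >])
     size (mask m s).

(* products of exactly i elements of s (i = 0 gives the empty product 1);
   they span V^i when V = span s *)
Fixpoint words (s : seq A) (i : nat) : seq A :=
  if i is i'.+1 then [seq x * y | x <- s, y <- words s i'] else [:: 1].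

Definition words_upto (s : seq A) (n : nat) : seq A :=
  flatten [seq words s i | i <- iota 0 n.+1].

(* log_n dim(sum_{i<=n} V^i), with log 0 = -oo; the values at n = 0, 1
   are irrelevant for the limsup *)
Definition gk_term (s : seq A) (n : nat) : \bar R :=
  let d := dim_span_mod (words_upto s n) in
  if (1 < n)%N then (if d == 0%N then -oo%E else (ln d%:R / ln n%:R)%:E)
  else 0%E.

(* GKdim of A / I: sup over finite-dimensional subspaces V = span (image of s) *)
Definition GKdim_quot : \bar R :=
  ereal_sup [set limn_esup (gk_term s) | s in [set: seq A]].
End GK.

Definition GKdim (R : realType) (k : fieldType) (D : algType k) : \bar R :=
  GKdim_quot R (fun c : k => c%:A : D) (fun z : D => z = 0).

Definition ideal_gen (A : nzRingType) (g : A) : A -> Prop :=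
  fun z => exists ps : seq (A * A), z = \sum_(pq <- ps) pq.1 * g * pq.2.

(* D[x,y] := {poly {poly D}}, with x = 'X%:P (inner variable) and y = 'X *)
Definition polyx (k : fieldType) (D : algType k) : {poly {poly D}} := 'X%:P.
Definition polyy (k : fieldType) (D : algType k) : {poly {poly D}} := 'X.

Definition GKdim_Dxy_mod (R : realType) (k : fieldType) (D : algType k) (a : D)
  : \bar R :=
  GKdim_quot R (fun c : k => (c%:A : D)%:P%:P : {poly {poly D}})
    (ideal_gen (polyx D * polyy D - a%:P%:P)).

(* Main.v *)
Require Import Defs.
From HB Require Import structures.
From mathcomp Require Import all_boot all_order all_algebra.
From mathcomp Require Import boolp classical_sets reals ereal sequences exp.
Import GRing.Theory.
Local Open Scope ring_scope.
Section Lin.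
Set Default Proof Using "All".
Variables (k : fieldType) (A : nzRingType) (f : k -> A) (I : A -> Prop).
Hypotheses (fD : forall c d, f (c + d) = f c + f d)
  (fM : forall c d, f (c * d) = f c * f d) (f1 : f 1 = 1) (f0 : f 0 = 0).
Hypotheses (I0 : I 0) (ID : forall x y, I x -> I y -> I (x + y))
  (IN : forall x, I x -> I (- x)) (IZ : forall c x, I x -> I (f c * x)).

Definition sp (t : seq A) z :=
  exists c : nat -> k, I (z - \sum_(i < size t) f (c i) * t`_i).
Definition ind (t : seq A) := forall c : nat -> k,
  I (\sum_(i < size t) f (c i) * t`_i) -> forall i, (i < size t)%N -> c i = 0.

Lemma IB x y : I x -> I y -> I (x - y).
Proof. by move=> Ix Iy; apply: ID => //; apply: IN. Qed.

Lemma sp_compat t z z' : I (z - z') -> sp t z' -> sp t z.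
Proof.
move=> Hz [c Hc]; exists c.
by rewrite -[z](subrK z') -addrA; apply: ID.
Qed.

Lemma sp_I t z : I z -> sp t z.
Proof.
move=> Iz; exists (fun _ => 0).
by rewrite big1 ?subr0 // => i _; rewrite f0 mul0r.
Qed.

Lemma sp0 t : sp t 0.
Proof. exact: sp_I. Qed.

Lemma sp_add t z1 z2 : sp t z1 -> sp t z2 -> sp t (z1 + z2).
Proof.
move=> [c1 H1] [c2 H2]; exists (fun i => c1 i + c2 i).
have -> : z1 + z2 - \sum_(i < size t) f (c1 i + c2 i) * t`_i =
  (z1 - \sum_(i < size t) f (c1 i) * t`_i) + (z2 - \sum_(i < size t) f (c2 i) * t`_i).
  have -> : \sum_(i < size t) f (c1 i + c2 i) * t`_i =
    \sum_(i < size t) f (c1 i) * t`_i + \sum_(i < size t) f (c2 i) * t`_i.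
    by rewrite -big_split; apply: eq_bigr => i _; rewrite fD mulrDl.
  by rewrite opprD addrACA.
exact: ID.
Qed.

Lemma sp_scale t c z : sp t z -> sp t (f c * z).
Proof.
move=> [d H]; exists (fun i => c * d i).
have -> : f c * z - \sum_(i < size t) f (c * d i) * t`_i =
  f c * (z - \sum_(i < size t) f (d i) * t`_i).
  rewrite mulrBr mulr_sumr; congr (_ - _); apply: eq_bigr => i _.
  by rewrite fM mulrA.
exact: IZ.
Qed.

Lemma sp_sum_seq t (T : eqType) (r : seq T) (F : T -> A) :
  (forall x, x \in r -> sp t (F x)) -> sp t (\sum_(x <- r) F x).
Proof.
elim: r => [|x r IH] H; first by rewrite big_nil; exact: sp0.
rewrite big_cons; apply: sp_add; first by apply: H; rewrite inE eqxx.
by apply: IH => y Hy; apply: H; rewrite inE Hy orbT.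
Qed.

Lemma sp_sum_ord t n (F : 'I_n -> A) :
  (forall i, sp t (F i)) -> sp t (\sum_(i < n) F i).
Proof.
move=> H; apply: (big_ind (sp t)) => //; [exact: sp0| exact: sp_add].
Qed.

Lemma sp_mem t z : z \in t -> sp t z.
Proof.
move=> zt; set j := index z t.
have jlt : (j < size t)%N by rewrite index_mem.
exists (fun i => if i == j then 1 else 0).
rewrite (bigD1 (Ordinal jlt)) //= eqxx f1 mul1r nth_index //.
rewrite big1 ?addr0 ?subrr // => i /negbTE ne.
have -> : (nat_of_ord i == j) = false.
  by apply/negbTE; apply: contraFN ne => /eqP e; apply/eqP/val_inj.
by rewrite f0 mul0r.
Qed.

Lemma sp_trans s t z : (forall y, y \in t -> sp s y) -> sp t z -> sp s z.
Proof.
move=> Hts [c Hc]; apply: (@sp_compat s z _ Hc).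
apply: sp_sum_ord => i; apply: sp_scale; apply: Hts; exact: mem_nth.
Qed.

Lemma sp_rcons t x z : sp t z -> sp (rcons t x) z.
Proof.
move=> [c Hc]; exists (fun i => if (i < size t)%N then c i else 0).
rewrite size_rcons big_ord_recr /= ltnn f0 mul0r addr0.
under eq_bigr => i _ do rewrite ltn_ord nth_rcons ltn_ord.
exact: Hc.
Qed.

Lemma fN c : f (- c) = - f c.
Proof. by apply/eqP; rewrite -addr_eq0 -fD addNr f0. Qed.

Lemma f_sum n (F : 'I_n -> k) : f (\sum_(i < n) F i) = \sum_(i < n) f (F i).
Proof. exact: (big_morph f fD f0). Qed.

Lemma I_sum n (F : 'I_n -> A) : (forall i, I (F i)) -> I (\sum_(i < n) F i).
Proof. by move=> H; apply: (big_ind I) => //. Qed.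

Lemma ind_rcons t x : ind t -> ~ sp t x -> ind (rcons t x).
Proof.
move=> It nsp c Hc.
have Hs : \sum_(i < size (rcons t x)) f (c i) * (rcons t x)`_i =
    \sum_(i < size t) f (c i) * t`_i + f (c (size t)) * x.
  rewrite size_rcons big_ord_recr /= nth_rcons ltnn eqxx.
  by under eq_bigr => i _ do rewrite nth_rcons ltn_ord.
rewrite Hs in Hc.
have cn0 : c (size t) = 0.
  apply/eqP; apply: contraT => cn; exfalso; apply: nsp.
  exists (fun i => - (c (size t))^-1 * c i).
  have -> : x - \sum_(i < size t) f (- (c (size t))^-1 * c i) * t`_i =
      f (c (size t))^-1 * (\sum_(i < size t) f (c i) * t`_i + f (c (size t)) * x).
    rewrite mulrDr mulr_sumr mulrA -fM mulVf // f1 mul1r addrC.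
    congr (_ + _); rewrite -sumrN; apply: eq_bigr => i _.
    by rewrite mulNr fN mulNr opprK fM mulrA.
  exact: IZ.
move=> i; rewrite size_rcons ltnS leq_eqVlt => /orP [/eqP -> //|ilt].
apply: It => //; by rewrite cn0 f0 mul0r addr0 in Hc.
Qed.

Lemma steinitz t s : ind t -> (forall y, y \in t -> sp s y) -> (size t <= size s)%N.
Proof.
move=> It Hts.
have : forall j, exists c : nat -> k, (j < size t)%N ->
    I (t`_j - \sum_(i < size s) f (c i) * s`_i).
  move=> j; case: (ltnP j (size t)) => jlt; last by exists (fun _ => 0).
  by have [c Hc] := Hts _ (mem_nth 0 jlt); exists c.
case/choice => C HC.
rewrite leqNgt; apply/negP => lt_st.
pose M : 'M[k]_(size t, size s) := \matrix_(j, i) C j i.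
have km : kermx M != 0.
  rewrite kermx_eq0 /row_free; apply/negP => /eqP rk.
  by have := rank_leq_col M; rewrite rk leqNgt lt_st.
have [r [j nz]] : exists r j, kermx M r j != 0.
  case: (pselect (exists r j, kermx M r j != 0)) => [//|H]; exfalso.
  move/eqP: km; apply; apply/matrixP => r j; rewrite [in RHS]mxE; apply/eqP.
  by apply: contraT => nz; exfalso; apply: H; exists r, j.
have vM : forall i : 'I_(size s), \sum_(j < size t) kermx M r j * C j i = 0.
  move=> i; have := congr1 (fun N : 'M_(size t, size s) => N r i) (mulmx_ker M).
  by rewrite !mxE => E; rewrite -[RHS]E; apply: eq_bigr => j' _; congr (_ * _); rewrite mxE.
pose j0 : 'I_(size t) := Ordinal (leq_ltn_trans (leq0n _) lt_st).
pose c : nat -> k := fun j => kermx M r (insubd j0 j).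
have cE : forall j : 'I_(size t), c j = kermx M r j.
  by move=> j'; rewrite /c; congr (kermx M r _); apply: val_inj; rewrite val_insubd ltn_ord.
have : I (\sum_(j < size t) f (c j) * t`_j).
  have -> : \sum_(j < size t) f (c j) * t`_j =
     \sum_(j < size t) f (c j) * (t`_j - \sum_(i < size s) f (C j i) * s`_i) +
     \sum_(i < size s) f (\sum_(j < size t) c j * C j i) * s`_i.
    under [X in _ = _ + X]eq_bigr => i _ do rewrite f_sum mulr_suml.
    rewrite exchange_big /= -big_split /=; apply: eq_bigr => j' _.
    rewrite mulrBr mulr_sumr.
    under [X in _ = _ + X]eq_bigr => i _ do rewrite fM -mulrA.
    by rewrite subrK.
  rewrite [X in _ + X]big1 ?addr0; last first.
    by move=> i _; under eq_bigr => j' _ do rewrite cE; rewrite vM f0 mul0r.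
  by apply: I_sum => j'; apply: IZ; apply: HC.
move/It => /(_ j (ltn_ord j)); rewrite cE => /eqP; by rewrite (negbTE nz).
Qed.

Lemma greedy s : exists m : seq bool, size m = size s /\ ind (mask m s) /\
  forall z, z \in s -> sp (mask m s) z.
Proof.
elim/last_ind: s => [|s x [m [Hm [Hi Hs]]]].
  by exists [::]; split => //; split => // c _ i.
case: (pselect (sp (mask m s) x)) => Hx.
  exists (rcons m false); rewrite mask_rcons // cats0 !size_rcons Hm; split => //.
  split => // z; rewrite mem_rcons inE => /orP [/eqP -> //|]; exact: Hs.
exists (rcons m true); rewrite mask_rcons // cats1 !size_rcons Hm; split => //.
split; first exact: ind_rcons.
move=> z; rewrite mem_rcons inE => /orP [/eqP ->|zs].
  by apply: sp_mem; rewrite mem_rcons inE eqxx.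
by apply: sp_rcons; apply: Hs.
Qed.

Lemma indE u : lin_indep_mod f I u <-> ind u.
Proof.
split.
  move=> H c Hc i ilt.
  by have := H (fun j => c j) Hc (Ordinal ilt).
move=> H c Hc i.
pose c' : nat -> k := fun j => if insub j is Some o then c o else 0.
have cE : forall j : 'I_(size u), c' j = c j by move=> j; rewrite /c' valK.
have := H c'; under eq_bigr => j _ do rewrite cE.
by move=> /(_ Hc i (ltn_ord i)); rewrite cE.
Qed.

Lemma dim_spec s : exists B, ind B /\ size B = dim_span_mod f I s /\
  (forall z, z \in B -> z \in s) /\ (forall z, z \in s -> sp B z).
Proof.
have [m [Hm [Hi Hs]]] := greedy s.
exists (mask m s); split => //; split; last first.
  split => // z; exact: mem_mask.
apply/eqP; rewrite eqn_leq; apply/andP; split.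
  have Hm' : size m == size s by rewrite Hm.
  have := @leq_bigmax_cond _ (fun m0 : (size s).-tuple bool => `[< lin_indep_mod f I (mask m0 s) >])
    (fun m0 => size (mask m0 s)) (Tuple Hm').
  by apply; apply/asboolP; apply/indE.
apply/bigmax_leqP => m' /asboolP /indE Hm'.
apply: steinitz => // y /mem_mask; exact: Hs.
Qed.

Lemma dim_ge s t : ind t -> (forall y, y \in t -> sp s y) ->
  (size t <= dim_span_mod f I s)%N.
Proof.
move=> It Hts; have [B [HB [<- [_ Hs]]]] := dim_spec s.
apply: steinitz => // y yt; apply: (@sp_trans B s y Hs); exact: Hts.
Qed.

Lemma dim_le s t : (forall y, y \in s -> sp t y) -> (dim_span_mod f I s <= size t)%N.
Proof.
move=> Hst; have [B [HB [<- [HBs _]]]] := dim_spec s.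
by apply: steinitz => // y /HBs; apply: Hst.
Qed.

Lemma ind_cat t1 t2 : ind t1 ->
  (forall c1 c2 : nat -> k,
     I (\sum_(i < size t1) f (c1 i) * t1`_i + \sum_(i < size t2) f (c2 i) * t2`_i) ->
     forall i, (i < size t2)%N -> c2 i = 0) ->
  ind (t1 ++ t2).
Proof.
move=> I1 H c Hc.
have split_sum : \sum_(i < size (t1 ++ t2)) f (c i) * (t1 ++ t2)`_i =
    \sum_(i < size t1) f (c i) * t1`_i +
    \sum_(i < size t2) f (c (size t1 + i)%N) * t2`_i.
  pose G := fun i : nat => f (c i) * (t1 ++ t2)`_i.
  have -> : \sum_(i < size (t1 ++ t2)) f (c i) * (t1 ++ t2)`_i =
      \sum_(i < size t1 + size t2) G i by rewrite size_cat.
  rewrite big_split_ord /=; congr (_ + _); apply: eq_bigr => i _;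
    rewrite /G nth_cat /=.
    by rewrite ltn_ord.
  by rewrite ltnNge leq_addr /= addKn.
rewrite split_sum in Hc.
have H2 := H c (fun i => c (size t1 + i)%N) Hc.
have Hc1 : I (\sum_(i < size t1) f (c i) * t1`_i).
  move: Hc; rewrite [X in _ + X]big1 ?addr0 // => i _.
  by rewrite H2 // f0 mul0r.
move=> i; rewrite size_cat => ilt.
case: (ltnP i (size t1)) => hi; first exact: I1.
have := H2 (i - size t1)%N; rewrite subnKC //; apply.
by rewrite ltn_subLR.
Qed.

End Lin.
Section Words.
Local Set Implicit Arguments. Local Unset Strict Implicit.
Variable A : nzRingType.
Implicit Types (s : seq A) (z : A).

Lemma words0 s : (1 : A) \in words s 0.
Proof. by rewrite inE. Qed.

Lemma wordsS s l z : z \in words s l.+1 ->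
  exists x y, [/\ x \in s, y \in words s l & z = x * y].
Proof. by move=> /allpairsP [[x y] [/= xs yw ->]]; exists x, y. Qed.

Lemma wordsS_f s l x y : x \in s -> y \in words s l -> x * y \in words s l.+1.
Proof. move=> xs yw /=; exact: (allpairs_f (fun a b => a * b) xs yw). Qed.

Lemma words_mul s l1 l2 x y : x \in words s l1 -> y \in words s l2 ->
  x * y \in words s (l1 + l2).
Proof.
elim: l1 x => [|l1 IH] x.
  by rewrite /= inE => /eqP -> yw; rewrite mul1r.
move=> /wordsS [u [v [us vw ->]]] yw; rewrite -mulrA addSn.
by apply: wordsS_f => //; apply: IH.
Qed.

Lemma words_upto_in s n l z : (l <= n)%N -> z \in words s l -> z \in words_upto s n.
Proof.
move=> ln zw; apply/flatten_mapP; exists l => //.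
by rewrite mem_iota add0n ltnS ln.
Qed.

Lemma words_upto_inv s n z : z \in words_upto s n ->
  exists2 l, (l <= n)%N & z \in words s l.
Proof.
by move=> /flatten_mapP [l]; rewrite mem_iota add0n ltnS => ln zw; exists l.
Qed.

Lemma words_sub s1 s2 l z : {subset s1 <= s2} -> z \in words s1 l -> z \in words s2 l.
Proof.
move=> sub; elim: l z => [|l IH] z; first by [].
by move=> /wordsS [x [y [xs yw ->]]]; apply: wordsS_f; [apply: sub|apply: IH].
Qed.

Lemma words_exp s x m : x \in s -> x ^+ m \in words s m.
Proof.
move=> xs; elim: m => [|m IH]; first by rewrite expr0 inE.
by rewrite exprS; exact: (wordsS_f xs IH).
Qed.

End Words.
Set Implicit Arguments. Unset Strict Implicit.

Lemma words_map (A B : nzRingType) (h : A -> B) s l z :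
  (forall x y, h (x * y) = h x * h y) -> h 1 = 1 ->
  z \in words s l -> h z \in words (map h s) l.
Proof.
move=> hM h1; elim: l z => [|l IH] z.
  by rewrite inE => /eqP ->; rewrite h1 inE.
move=> /wordsS [x [y [xs yw ->]]]; rewrite hM; apply: wordsS_f.
  exact: map_f.
exact: IH.
Qed.


Unset Implicit Arguments. Set Strict Implicit.
Lemma polyC_central (R : nzRingType) (c : R) :
  (forall d, c * d = d * c) -> forall p : {poly R}, c%:P * p = p * c%:P.
Proof. by move=> H p; apply/polyP => i; rewrite coefCM coefMC H. Qed.

Lemma sum_ext (V : nmodType) n1 n2 (F : nat -> V) :
  (forall j, (n1 <= j)%N -> F j = 0) -> (n1 <= n2)%N ->
  \sum_(j < n1) F j = \sum_(j < n2) F j.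
Proof.
move=> H le; rewrite -!(big_mkord xpredT) (big_cat_nat (leq0n n1) le) /=.
rewrite [X in _ = _ + X]big1_seq ?addr0 // => j /andP [_].
by rewrite mem_index_iota => /andP [hj _]; apply: H.
Qed.

Section Qring.
Variables (k : fieldType) (D : algType k) (a : D).
Hypothesis a_central : forall d : D, a * d = d * a.

Definition bet (d : D) : {poly {poly D}} := d%:P%:P.
Definition gQ : {poly {poly D}} := polyx D * polyy D - a%:P%:P.
Definition IQ := ideal_gen gQ.
Definition fQ (c : k) : {poly {poly D}} := (c%:A : D)%:P%:P.
Definition f0 (c : k) : D := c%:A.
Definition I0 (z : D) : Prop := z = 0.

Lemma algM (c d : k) : (c * d)%:A = c%:A * d%:A :> D.
Proof. by rewrite -scalerAl mul1r scalerA. Qed.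

Lemma f0D c d : f0 (c + d) = f0 c + f0 d. Proof. by rewrite /f0 scalerDl. Qed.
Lemma f0M c d : f0 (c * d) = f0 c * f0 d. Proof. by rewrite /f0 algM. Qed.
Lemma f01 : f0 1 = 1. Proof. by rewrite /f0 scale1r. Qed.
Lemma f00 : f0 0 = 0. Proof. by rewrite /f0 scale0r. Qed.
Lemma I00 : I0 0. Proof. by []. Qed.
Lemma I0D x y : I0 x -> I0 y -> I0 (x + y). Proof. by rewrite /I0 => -> ->; rewrite addr0. Qed.
Lemma I0N x : I0 x -> I0 (- x). Proof. by rewrite /I0 => ->; rewrite oppr0. Qed.
Lemma I0Z c x : I0 x -> I0 (f0 c * x). Proof. by rewrite /I0 => ->; rewrite mulr0. Qed.

Lemma fQD c d : fQ (c + d) = fQ c + fQ d. Proof. by rewrite /fQ scalerDl !polyCD. Qed.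
Lemma fQM c d : fQ (c * d) = fQ c * fQ d. Proof. by rewrite /fQ algM !polyCM. Qed.
Lemma fQ1 : fQ 1 = 1. Proof. by rewrite /fQ scale1r. Qed.
Lemma fQ0 : fQ 0 = 0. Proof. by rewrite /fQ scale0r. Qed.
Lemma fQE c : fQ c = bet (f0 c). Proof. by []. Qed.

Lemma betM x y : bet (x * y) = bet x * bet y. Proof. by rewrite /bet !polyCM. Qed.
Lemma bet1 : bet 1 = 1. Proof. by []. Qed.
Lemma betD x y : bet (x + y) = bet x + bet y. Proof. by rewrite /bet !polyCD. Qed.
Lemma bet0 : bet 0 = 0. Proof. by rewrite /bet !polyC0. Qed.

Lemma X_central (q : {poly {poly D}}) : polyx D * q = q * polyx D.
Proof. by apply: polyC_central => d; rewrite commr_polyX. Qed.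
Lemma Y_central (q : {poly {poly D}}) : polyy D * q = q * polyy D.
Proof. by rewrite /polyy commr_polyX. Qed.
Lemma A_central (q : {poly {poly D}}) : a%:P%:P * q = q * a%:P%:P.
Proof. by apply: polyC_central; apply: polyC_central. Qed.
Lemma g_central (q : {poly {poly D}}) : gQ * q = q * gQ.
Proof.
have h1 : polyx D * polyy D * q = q * (polyx D * polyy D).
  by rewrite -mulrA Y_central !mulrA X_central.
by rewrite /gQ mulrBl mulrBr h1 A_central.
Qed.

Lemma IQ0 : IQ 0. Proof. by exists [::]; rewrite big_nil. Qed.
Lemma IQD x y : IQ x -> IQ y -> IQ (x + y).
Proof. by move=> [p ->] [q ->]; exists (p ++ q); rewrite big_cat. Qed.
Lemma IQN x : IQ x -> IQ (- x).
Proof.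
move=> [p ->]; exists [seq (- pq.1, pq.2) | pq <- p].
by rewrite big_map -sumrN; apply: eq_bigr => pq _ /=; rewrite !mulNr.
Qed.
Lemma IQml q x : IQ x -> IQ (q * x).
Proof.
move=> [p ->]; exists [seq (q * pq.1, pq.2) | pq <- p].
by rewrite big_map mulr_sumr; apply: eq_bigr => pq _ /=; rewrite !mulrA.
Qed.
Lemma IQmr q x : IQ x -> IQ (x * q).
Proof.
move=> [p ->]; exists [seq (pq.1, pq.2 * q) | pq <- p].
by rewrite big_map mulr_suml; apply: eq_bigr => pq _ /=; rewrite !mulrA.
Qed.
Lemma IQZ c x : IQ x -> IQ (fQ c * x). Proof. exact: IQml. Qed.
Lemma IQg : IQ gQ. Proof. by exists [:: (1, 1)]; rewrite big_seq1 mul1r mulr1. Qed.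

Definition psi m (p : {poly {poly D}}) : D :=
  \sum_(j < size p) (p`_j)`_(m + j) * a ^+ j.

Lemma psiE m (p : {poly {poly D}}) M : (forall j, (M <= j)%N -> p`_j = 0) ->
  psi m p = \sum_(j < M) (p`_j)`_(m + j) * a ^+ j.
Proof.
move=> H; rewrite /psi (@sum_ext _ (size p) (maxn M (size p))
   (fun j => (p`_j)`_(m + j) * a ^+ j)); last 2 first.
- by move=> j hj; rewrite (nth_default 0 hj) coef0 mul0r.
- exact: leq_maxr.
rewrite (@sum_ext _ M (maxn M (size p)) (fun j => (p`_j)`_(m + j) * a ^+ j)) //.
- by move=> j hj; rewrite H // coef0 mul0r.
- exact: leq_maxl.
Qed.

Lemma psiD m p q : psi m (p + q) = psi m p + psi m q.
Proof.
have Hz : forall r : {poly {poly D}}, (size r <= maxn (size p) (size q))%N ->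
    forall j, (maxn (size p) (size q) <= j)%N -> r`_j = 0.
  by move=> r hr j hj; rewrite nth_default // (leq_trans hr hj).
rewrite (psiE m _ _ (Hz _ (size_polyD p q))) (psiE m _ _ (Hz _ (leq_maxl _ _))).
rewrite (psiE m _ _ (Hz _ (leq_maxr _ _))) -big_split /=.
by apply: eq_bigr => j _; rewrite coefD coefD mulrDl.
Qed.

Lemma psi0 m : psi m 0 = 0.
Proof. by rewrite /psi size_poly0 big_ord0. Qed.

Lemma psiN m p : psi m (- p) = - psi m p.
Proof. by apply/eqP; rewrite -addr_eq0 -psiD addNr psi0. Qed.

Lemma psiZ m c p : psi m (fQ c * p) = c%:A * psi m p.
Proof.
rewrite (psiE m _ (size p)); last first.
  by move=> j hj; rewrite /fQ coefCM nth_default // mulr0.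
rewrite /psi mulr_sumr; apply: eq_bigr => j _.
by rewrite /fQ coefCM coefCM mulrA.
Qed.

Lemma psi_sum m n (F : 'I_n -> {poly {poly D}}) :
  psi m (\sum_(i < n) F i) = \sum_(i < n) psi m (F i).
Proof. exact: (big_morph (psi m) (psiD m) (psi0 m)). Qed.

Lemma psi_sum_seq m (T : Type) (r : seq T) (F : T -> {poly {poly D}}) :
  psi m (\sum_(x <- r) F x) = \sum_(x <- r) psi m (F x).
Proof. exact: (big_morph (psi m) (psiD m) (psi0 m)). Qed.

Lemma psi_mulg m h : psi m (h * gQ) = 0.
Proof.
have cE : forall j, (h * gQ)`_j =
    (if j == 0%N then 0 else h`_j.-1 * 'X) - h`_j * a%:P.
  move=> j; rewrite /gQ /polyx /polyy mulrBr coefB mulrA coefMX coefMC.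
  by case: (j == 0%N) => //; rewrite coefMC.
rewrite (psiE m _ (size h).+1); last first.
  move=> j hj; rewrite cE; case: eqP => [j0|j0].
    by rewrite j0 in hj.
  move/eqP: j0 => j0.
  have e1 : h`_j.-1 = 0.
    by rewrite (nth_default 0) // -ltnS prednK ?lt0n.
  have e2 : h`_j = 0 by rewrite (nth_default 0) // ltnW.
  by rewrite e1 e2 !mul0r subrr.
pose u j := (h`_j)`_(m + j).
have E : forall j, ((h * gQ)`_j)`_(m + j) * a ^+ j =
    (if j == 0%N then 0 else u j.-1 * a ^+ j) - u j * a ^+ j.+1.
  move=> j; rewrite cE coefB coefMC exprS mulrA mulrBl; congr (_ - _).
  case: eqP => [-> | /eqP j0]; first by rewrite coef0 mul0r.
  rewrite coefMX addn_eq0 (negbTE j0) andbF /u; congr (_ * _).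
  have -> : (m + j).-1 = (m + j.-1)%N by case: j j0 => // j' _; rewrite addnS.
  by [].
under eq_bigr => j _ do rewrite E.
rewrite sumrB big_ord_recl /= big_ord_recr /= add0r.
have -> : u (size h) = 0 by rewrite /u (nth_default 0 (leqnn (size h))) coef0.
rewrite mul0r addr0; apply/eqP; rewrite subr_eq0; apply/eqP.
by apply: eq_bigr => j _.
Qed.

Lemma psi_IQ m z : IQ z -> psi m z = 0.
Proof.
move=> [ps ->]; rewrite psi_sum_seq big1 // => pq _.
by rewrite -mulrA g_central mulrA psi_mulg.
Qed.

Lemma psi_mono m b i : psi m (bet b * polyx D ^+ i) = if m == i then b else 0.
Proof.
have -> : bet b * polyx D ^+ i = (b%:P * 'X^i)%:P.
  by rewrite /bet /polyx polyCM rmorphXn.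
rewrite (psiE m _ 1); last by move=> j hj; rewrite coefC; case: j hj.
rewrite big_ord1 expr0 mulr1 coefC /= addn0 coefCM coefXn.
by case: eqP => _; rewrite ?mulr1 ?mulr0.
Qed.

Local Notation dimD_ge := (dim_ge k D f0 I0 f0D f0M f01 f00 I00 I0D I0N I0Z).
Local Notation dimD_spec := (dim_spec k D f0 I0 f0D f0M f01 f00 I00 I0D I0N I0Z).
Local Notation dimQ_ge := (dim_ge k _ fQ IQ fQD fQM fQ1 fQ0 IQ0 IQD IQN IQZ).
Local Notation spD_mem := (sp_mem k D f0 I0 f0D f0M f01 f00 I00 I0D I0N I0Z).
Local Notation spQ_mem := (sp_mem k _ fQ IQ fQD fQM fQ1 fQ0 IQ0 IQD IQN IQZ).
Local Notation indQ_cat := (ind_cat k _ fQ IQ fQD fQM fQ1 fQ0 IQ0 IQD IQN IQZ).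

Lemma f0_eq0 c : f0 c = 0 -> c = 0.
Proof.
move=> H; apply/eqP; apply: contraT => nz; exfalso.
have : c^-1 *: (c *: (1 : D)) = 1 by rewrite scalerA mulVf // scale1r.
by rewrite -/(f0 c) H scaler0 => /eqP; rewrite eq_sym oner_eq0.
Qed.

Lemma dimD_pos s n : (1 <= dim_span_mod f0 I0 (words_upto s n))%N.
Proof.
have := dimD_ge (words_upto s n) [:: 1]; apply.
  move=> c Hc i; rewrite /= ltnS leqn0 => /eqP ->.
  by move: Hc; rewrite big_ord1 /= mulr1 => /f0_eq0.
move=> y; rewrite inE => /eqP ->; apply: spD_mem.
by apply: (words_upto_in (leq0n n)); rewrite inE.
Qed.

Lemma psi_spanQ m (t : seq {poly {poly D}}) (c : nat -> k) :
  psi m (\sum_(i < size t) fQ (c i) * t`_i) =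
  \sum_(i < size t) (c i)%:A * psi m t`_i.
Proof. by rewrite psi_sum; apply: eq_bigr => i _; rewrite psiZ. Qed.

Lemma lowerQ s n :
  (n.+1 * dim_span_mod f0 I0 (words_upto s n) <=
   dim_span_mod fQ IQ (words_upto (polyx D :: map bet s) n.*2))%N.
Proof.
have [B [HB [<- [HBs _]]]] := dimD_spec (words_upto s n).
pose blk i := [seq bet b * polyx D ^+ i | b <- B].
pose F m := flatten [seq blk i | i <- iota 0 m].
have FS m : F m.+1 = F m ++ blk m.
  by rewrite /F -addn1 iotaD map_cat flatten_cat /= cats0.
have sizeF m : size (F m) = (m * size B)%N.
  elim: m => [|m IH]; first by [].
  by rewrite FS size_cat IH size_map mulSn addnC.
have memF m z : z \in F m -> exists2 i, (i < m)%N & exists2 b, b \in B & z = bet b * polyx D ^+ i.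
  move=> /flatten_mapP [i]; rewrite mem_iota add0n => im /mapP [b bB ->].
  by exists i => //; exists b.
have indF m : ind k _ fQ IQ (F m).
  elim: m => [|m IH].
    by move=> c _ i; rewrite /F /=.
  rewrite FS; apply: indQ_cat => // c1 c2 Hc i ilt.
  have := psi_IQ m _ Hc; rewrite psiD !psi_spanQ.
  rewrite big1 ?add0r; last first.
    move=> j _; have [i' i'm [b _ ->]] := memF m _ (mem_nth 0 (ltn_ord j)).
    by rewrite psi_mono; case: eqP => [e|_]; [rewrite e ltnn in i'm|rewrite mulr0].
  have E : forall j : 'I_(size (blk m)), psi m (blk m)`_j = B`_j.
    move=> j; rewrite /blk (nth_map 0) -?(size_map (fun b => bet b * polyx D ^+ m)) //.
    by rewrite psi_mono eqxx.
  under eq_bigr => j _ do rewrite E.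
  move=> H0; have := HB c2; rewrite size_map in ilt; apply => //.
  move: H0; rewrite -(big_mkord xpredT (fun j => (c2 j)%:A * B`_j)) size_map big_mkord.
  by move=> H0; exact: H0.
rewrite -sizeF; apply: dimQ_ge; first exact: indF.
move=> z /memF [i ilt [b bB ->]]; apply: spQ_mem.
have [l ln bw] := words_upto_inv (HBs _ bB).
apply: (@words_upto_in _ _ _ (l + i)%N).
  by rewrite -addnn leq_add.
apply: words_mul.
  apply: (@words_sub _ (map bet s)); first by move=> x xs; rewrite inE xs orbT.
  exact: (words_map betM bet1 bw).
by apply: words_exp; rewrite inE eqxx.
Qed.

Local Notation PP := {poly {poly D}}.
Local Notation dimQ_le := (dim_le k _ fQ IQ fQD fQM fQ1 fQ0 IQ0 IQD IQN IQZ).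
Local Notation spQ := (sp k _ fQ IQ).
Local Notation spQ_sum_seq := (sp_sum_seq k _ fQ IQ fQD fQM fQ1 fQ0 IQ0 IQD IQN IQZ).
Local Notation spQ_trans := (sp_trans k _ fQ IQ fQD fQM fQ1 fQ0 IQ0 IQD IQN IQZ).
Local Notation spQ_compat := (sp_compat k _ fQ IQ fQD fQM fQ1 fQ0 IQ0 IQD IQN IQZ).

Definition Sums (S : PP -> Prop) (z : PP) :=
  exists zs : seq PP, (forall u, u \in zs -> S u) /\ z = \sum_(u <- zs) u.

Lemma Sums1 S u : S u -> Sums S u.
Proof. by move=> Su; exists [:: u]; rewrite big_seq1; split => // v; rewrite inE => /eqP ->. Qed.
Lemma Sums0 S : Sums S 0.
Proof. by exists [::]; rewrite big_nil. Qed.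
Lemma SumsD S x y : Sums S x -> Sums S y -> Sums S (x + y).
Proof.
move=> [xs [Hx ->]] [ys [Hy ->]]; exists (xs ++ ys); rewrite big_cat; split => //.
by move=> u; rewrite mem_cat => /orP [/Hx|/Hy].
Qed.
Lemma Sums_ord S n (F : 'I_n -> PP) : (forall i, Sums S (F i)) -> Sums S (\sum_(i < n) F i).
Proof. by move=> H; apply: (big_ind (Sums S)) => //; [exact: Sums0|exact: SumsD]. Qed.
Lemma Sums_mul (S1 S2 S3 : PP -> Prop) x y : Sums S1 x -> Sums S2 y ->
  (forall u v, S1 u -> S2 v -> S3 (u * v)) -> Sums S3 (x * y).
Proof.
move=> [xs [Hx ->]] [ys [Hy ->]] H.
elim: xs Hx => [|u xs IH] Hx; first by rewrite big_nil mul0r; exact: Sums0.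
rewrite big_cons mulrDl; apply: SumsD; last by apply: IH => v vx; apply: Hx; rewrite inE vx orbT.
exists [seq u * v | v <- ys]; rewrite big_map mulr_sumr; split => // w /mapP [v vy ->].
by apply: H; [apply: Hx; rewrite inE eqxx|apply: Hy].
Qed.
Lemma Sums_sp S T z : (forall u, S u -> spQ T u) -> Sums S z -> spQ T z.
Proof. by move=> H [zs [Hz ->]]; apply: spQ_sum_seq => u /Hz; apply: H. Qed.

Lemma Xn_central i (q : PP) : polyx D ^+ i * q = q * polyx D ^+ i.
Proof. by have := @commrX _ q (polyx D) i (esym (X_central q)). Qed.
Lemma Yn_central i (q : PP) : polyy D ^+ i * q = q * polyy D ^+ i.
Proof. by have := @commrX _ q (polyy D) i (esym (Y_central q)). Qed.
Definition mon i j : PP := polyx D ^+ i * polyy D ^+ j.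
Lemma mon_central i j (q : PP) : mon i j * q = q * mon i j.
Proof. by rewrite /mon -mulrA (Yn_central j q) [LHS]mulrA (Xn_central i q) -mulrA. Qed.
Lemma monD i1 j1 i2 j2 : mon i1 j1 * mon i2 j2 = mon (i1 + i2) (j1 + j2).
Proof.
have e : polyy D ^+ j1 * (polyx D ^+ i2 * polyy D ^+ j2) =
    polyx D ^+ i2 * polyy D ^+ (j1 + j2).
  by rewrite Yn_central -mulrA -exprD addnC.
by rewrite /mon -mulrA e mulrA -exprD.
Qed.

Lemma IQ_pow m : IQ ((polyx D * polyy D) ^+ m - (a%:P%:P) ^+ m).
Proof.
elim: m => [|m IH]; first by rewrite !expr0 subrr; exact: IQ0.
have -> : (polyx D * polyy D) ^+ m.+1 - (a%:P%:P) ^+ m.+1 =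
  (polyx D * polyy D) * ((polyx D * polyy D) ^+ m - (a%:P%:P) ^+ m) +
  gQ * (a%:P%:P) ^+ m.
  by rewrite /gQ !exprS mulrBr mulrBl addrA subrK.
by apply: IQD; [apply: IQml|apply: IQmr; exact: IQg].
Qed.

Section Upper.
Variable s' : seq PP.
Definition coefsV : seq D :=
  flatten [seq flatten [seq (q : seq D) | q : {poly D} <- (p : seq {poly D})] | p : PP <- s'].
Definition sU : seq D := a :: coefsV.
Definition KU : nat := \max_(p <- s') maxn (size p) (\max_(q <- (p : seq {poly D})) size q).

Lemma KU_size p : p \in s' -> (size p <= KU)%N.
Proof.
move=> ps; apply: leq_trans (leq_bigmax_seq _ ps isT); exact: leq_maxl.
Qed.
Lemma KU_size2 p j : p \in s' -> (size (p`_j)%R <= KU)%N.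
Proof.
move=> ps; case: (ltnP j (size p)) => jl; last by rewrite nth_default // size_poly0.
apply: leq_trans (leq_bigmax_seq _ ps isT); apply: leq_trans (leq_maxr _ _).
exact: (leq_bigmax_seq _ (mem_nth 0 jl) isT).
Qed.
Lemma coef_in p j i : p \in s' -> (j < size p)%N -> (i < size (p`_j)%R)%N -> (p`_j)`_i \in sU.
Proof.
move=> ps jl il; rewrite inE; apply/orP; right; apply/flatten_mapP; exists p => //.
by apply/flatten_mapP; exists p`_j; [exact: mem_nth|exact: mem_nth].
Qed.

Definition Mon l (u : PP) := exists w i j,
  [/\ w \in words sU l, (i <= l * KU)%N, (j <= l * KU)%N & u = bet w * mon i j].

Lemma polyE (R : nzRingType) (p : {poly R}) : p = \sum_(i < size p) (p`_i)%:P * 'X^i.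
Proof.
rewrite -[p in LHS]coefK poly_def; apply: eq_bigr => i _; by rewrite mul_polyC.
Qed.

Lemma sprime_sums p : p \in s' -> Sums (Mon 1) p.
Proof.
move=> ps; rewrite [p]polyE; apply: Sums_ord => j.
rewrite [p`_j]polyE rmorph_sum /= mulr_suml; apply: Sums_ord => i.
apply: Sums1; exists ((p`_j)`_i * 1), i, j; split.
- by apply: wordsS_f; [apply: coef_in|rewrite inE].
- by rewrite mul1n; apply: leq_trans (KU_size2 p j ps); exact: ltnW.
- by rewrite mul1n; apply: leq_trans (KU_size p ps); exact: ltnW.
by rewrite mulr1 /bet /mon polyCM rmorphXn mulrA.
Qed.

Lemma words_sums l z : z \in words s' l -> Sums (Mon l) z.
Proof.
elim: l z => [|l IH] z.
  rewrite inE => /eqP ->; apply: Sums1; exists 1, 0%N, 0%N; split => //.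
    by rewrite inE.
  by rewrite /mon !expr0 !mulr1 bet1.
move=> /wordsS [p [z' [ps zw ->]]].
apply: (Sums_mul _ _ _ _ _ (sprime_sums p ps) (IH _ zw)).
move=> u v [w1 [i1 [j1 [w1s hi1 hj1 ->]]]] [w2 [i2 [j2 [w2s hi2 hj2 ->]]]].
exists (w1 * w2), (i1 + i2)%N, (j1 + j2)%N; split.
- by rewrite -add1n; apply: words_mul.
- by rewrite mulSn; apply: leq_add; rewrite // -[KU]mul1n.
- by rewrite mulSn; apply: leq_add; rewrite // -[KU]mul1n.
by rewrite betM -monD -[LHS]mulrA (mon_central i1 j1 (bet w2 * mon i2 j2)) (mon_central i1 j1 (mon i2 j2)) !mulrA.
Qed.

Local Notation spD := (sp k D f0 I0).

Definition pairsT (T : nat) : seq (nat * nat) :=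
  [seq (i, 0%N) | i <- iota 0 T.+1] ++ [seq (0%N, j) | j <- iota 0 T.+1].
Definition Fam (G : seq D) T : seq PP :=
  [seq bet g * mon ij.1 ij.2 | g <- G, ij <- pairsT T].

Lemma size_Fam G T : size (Fam G T) = (size G * (2 * T.+1))%N.
Proof. by rewrite /Fam size_allpairs /pairsT size_cat !size_map size_iota mul2n addnn. Qed.

Lemma sp_transfer (G : seq D) d M : spD G d ->
  spQ [seq bet g * M | g <- G] (bet d * M).
Proof.
move=> [c Hc]; exists c.
have -> : bet d * M = \sum_(i < size G) fQ (c i) * (bet G`_i * M).
  move: Hc; rewrite /I0 => /eqP; rewrite subr_eq0 => /eqP ->.
  rewrite (big_morph bet betD bet0) mulr_suml; apply: eq_bigr => i _.
  by rewrite betM fQE mulrA.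
rewrite -(big_mkord xpredT (fun i => fQ (c i) * [seq bet g * M | g <- G]`_i)) size_map.
rewrite big_mkord [X in _ - X](eq_bigr (fun i : 'I_(size G) => fQ (c i) * (bet G`_i * M))).
  by rewrite subrr; exact: IQ0.
move=> i _; congr (_ * _); apply: nth_map; exact: ltn_ord.
Qed.

Lemma An_central m (q : PP) : (a%:P%:P) ^+ m * q = q * (a%:P%:P) ^+ m.
Proof. by have := @commrX _ q (a%:P%:P) m (esym (A_central q)). Qed.

Lemma Mon_sp (G : seq D) n l u :
  (forall d, d \in words_upto sU (n * KU.+1) -> spD G d) ->
  (l <= n)%N -> Mon l u -> spQ (Fam G (n * KU)) u.
Proof.
move=> HG ln [w [i [j [ww hi hj ->]]]].
set m := minn i j; set i' := (i - m)%N; set j' := (j - m)%N.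
have hmi : (m <= i)%N by exact: geq_minl.
have hmj : (m <= j)%N by exact: geq_minr.
have lK : (l * KU <= n * KU)%N by exact: leq_mul.
have monE : mon i j = mon i' j' * (polyx D * polyy D) ^+ m.
  rewrite (exprMn_comm _ (X_central _)) -/(mon m m) monD /i' /j' !subnK //.
have e1 : IQ (bet w * mon i j - bet (w * a ^+ m) * mon i' j').
  have -> : bet w * mon i j - bet (w * a ^+ m) * mon i' j' =
      bet w * mon i' j' * ((polyx D * polyy D) ^+ m - (a%:P%:P) ^+ m).
    rewrite monE betM /bet !rmorphXn /= mulrBr !mulrA; congr (_ - _).
    by rewrite -!mulrA An_central !mulrA.
  by apply: IQml; exact: IQ_pow.
apply: (@spQ_compat _ _ _ e1).
have wa : w * a ^+ m \in words_upto sU (n * KU.+1).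
  apply: (@words_upto_in _ _ _ (l + m)%N); last first.
    by apply: words_mul => //; apply: words_exp; rewrite inE eqxx.
  rewrite mulnS; apply: leq_add => //.
  by apply: leq_trans hmi _; apply: leq_trans hi lK.
have := sp_transfer _ _ (mon i' j') (HG _ wa); apply: spQ_trans.
move=> y /mapP [g gG ->]; apply: spQ_mem.
have ij'P : (i', j') \in pairsT (n * KU).
  rewrite /pairsT mem_cat /i' /j' /m; case: (leqP i j) => ij.
    rewrite subnn; apply/orP; right; apply/mapP; exists (j - i)%N => //.
    rewrite mem_iota add0n ltnS; apply: leq_trans (leq_subr _ _) _.
    by apply: leq_trans hj lK.
  rewrite subnn; apply/orP; left; apply/mapP; exists (i - j)%N => //.
  rewrite mem_iota add0n ltnS; apply: leq_trans (leq_subr _ _) _.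
  by apply: leq_trans hi lK.
exact: (allpairs_f (fun g ij => bet g * mon ij.1 ij.2) gG ij'P).
Qed.

Lemma upperQ n :
  (dim_span_mod fQ IQ (words_upto s' n) <=
   dim_span_mod f0 I0 (words_upto sU (n * KU.+1)) * (2 * (n * KU).+1))%N.
Proof.
have [B [HB [<- [_ HBs]]]] := dimD_spec (words_upto sU (n * KU.+1)).
rewrite -size_Fam; apply: dimQ_le => z /words_upto_inv [l ln zw].
apply: (Sums_sp (Mon l)); last exact: words_sums zw.
by move=> u; apply: Mon_sp.
Qed.

End Upper.

End Qring.
Section Limsup.
Import Order.TTheory Num.Theory.
Local Open Scope classical_set_scope.
Local Open Scope ereal_scope.
Variable R : realType.
Implicit Types (u : nat -> \bar R) (x y : \bar R).

Lemma limsup_le u x : (exists N, forall n, (N <= n)%N -> u n <= x) -> limn_esup u <= x.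
Proof.
move=> [N HN]; rewrite /limn_esup ereal_normedtype.limf_esupE.
apply: (@le_trans _ _ (ereal_sup [set u n | n in [set n | (N <= n)%N]])).
  by apply: ereal_inf_lbound; exists [set n | (N <= n)%N] => //; exists N.
by apply: ge_ereal_sup => _ [n /= Nn <-]; apply: HN.
Qed.

Lemma limsup_ge u x : (forall N, exists n, (N <= n)%N /\ x <= u n) -> x <= limn_esup u.
Proof.
move=> H; rewrite /limn_esup ereal_normedtype.limf_esupE.
apply: le_ereal_inf_tmp => _ [V [N _ HN] <-].
have [n [Nn xun]] := H N.
apply: le_trans xun _; apply: ereal_sup_ubound; exists n => //; exact: HN.
Qed.

Lemma limsup_lt u y : limn_esup u < y -> exists N, forall n, (N <= n)%N -> u n < y.
Proof.
rewrite /limn_esup ereal_normedtype.limf_esupE => /ereal_inf_lt [_ [V [N _ HN] <-]] lt.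
exists N => n Nn; apply: le_lt_trans lt; apply: ereal_sup_ubound; exists n => //.
exact: HN.
Qed.

Lemma lt_limsup u y : y < limn_esup u -> forall N, exists n, (N <= n)%N /\ y < u n.
Proof.
move=> lt N; apply: contrapT => H; move: lt; apply/negP; rewrite -leNgt.
apply: limsup_le; exists N => n Nn; rewrite leNgt; apply/negP => yu.
by apply: H; exists n.
Qed.

End Limsup.
From mathcomp Require Import lra zify.
Section GKT.
Import Order.TTheory Num.Theory.
Local Open Scope ereal_scope.
Variable R : realType.

Definition gkt (d : nat -> nat) (n : nat) : \bar R :=
  let dd := d n in
  if (1 < n)%N then (if dd == 0%N then -oo%E else (ln (R:=R) dd%:R / ln (R:=R) n%:R)%:E)
  else 0%E.

Lemma gkt_val d n : (1 < n)%N -> (1 <= d n)%N ->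
  gkt d n = (ln (R:=R) (d n)%:R / ln (R:=R) n%:R)%:E.
Proof. by rewrite /gkt => -> d1; case: eqP => // e; rewrite e in d1. Qed.

Lemma ln_nat_gt0 n : (1 < n)%N -> (0 < ln (R:=R) n%:R)%R.
Proof. by move=> n1; apply: ln_gt0; rewrite ltr1n. Qed.

Lemma ln_nat_ge0 n : (1 <= n)%N -> (0 <= ln (R:=R) n%:R)%R.
Proof. by move=> n1; apply: ln_ge0; rewrite ler1n. Qed.

Lemma ln_natM m n : (0 < m)%N -> (0 < n)%N ->
  ln (R:=R) (m * n)%:R = (ln (R:=R) m%:R + ln (R:=R) n%:R)%R.
Proof. by move=> m0 n0; rewrite natrM lnM // posrE ltr0n. Qed.

Lemma ln_nat_le m n : (0 < m)%N -> (m <= n)%N -> (ln (R:=R) m%:R <= ln (R:=R) n%:R)%R.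
Proof.
move=> m0 mn; rewrite ler_ln ?posrE ?ltr0n ?ler_nat //.
exact: leq_trans mn.
Qed.

Lemma gkt_ge0 d n : (forall n, (1 <= d n)%N) -> 0 <= gkt d n.
Proof.
move=> d1; case: (ltnP 1 n) => n1; last by rewrite /gkt ltnNge n1.
rewrite gkt_val // lee_fin divr_ge0 //; first exact: ln_nat_ge0.
exact: ltW (ln_nat_gt0 _ n1).
Qed.

Lemma limsup_gkt_ge0 d : (forall n, (1 <= d n)%N) -> 0 <= limn_esup (gkt d).
Proof. by move=> d1; apply: limsup_ge => N; exists N; split => //; exact: gkt_ge0. Qed.

Lemma ln_big (M : R) : exists N, forall n, (N <= n)%N -> (M <= ln (R:=R) n%:R)%R.
Proof.
have h0 : (0 <= expR M)%R by exact: ltW (expR_gt0 M).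
exists (Num.Def.archi_bound (expR M)) => n hn.
rewrite -[X in (X <= _)%R](expRK M) ler_ln ?posrE ?expR_gt0 //.
- apply: ltW; apply: lt_le_trans (archi_boundP h0) _; by rewrite ler_nat.
- rewrite ltr0n; apply: leq_trans hn; rewrite lt0n; apply/eqP => e.
  by have := archi_boundP h0; rewrite e ltNge h0.
Qed.

Lemma gk_lower (a b : nat -> nat) : (forall n, (1 <= a n)%N) ->
  (forall n, (n.+1 * a n <= b n.*2)%N) ->
  limn_esup (gkt a) + 1%:E <= limn_esup (gkt b).
Proof.
move=> a1 hab.
have L0 := limsup_gkt_ge0 _ a1.
have CL : forall z : R, z%:E < limn_esup (gkt a) + 1%:E -> z%:E <= limn_esup (gkt b).
  move=> z hz; apply: limsup_ge => N.
  have [y [hy1 hy2]] : exists y : R, (z - 1 < y)%R /\ y%:E < limn_esup (gkt a).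
    move: hz L0; case: (limn_esup (gkt a)) => [l| |] hz L0.
    - exists ((z - 1 + l) / 2)%R; move: hz; rewrite -EFinD !lte_fin => hz.
      by split; lra.
    - by exists z; split; [lra|exact: ltry].
    - by [].
  pose eta := (1 + y - z)%R.
  have eta0 : (0 < eta)%R by rewrite /eta; lra.
  have [N1 HN1] := ln_big (z * ln (R:=R) 2%:R / eta).
  have [n [hn hyn]] := lt_limsup _ _ _ hy2 (maxn N (maxn N1 2)).
  have n2 : (1 < n)%N by move: hn; lia.
  have nN1 : (N1 <= n)%N by move: hn; lia.
  have nN : (N <= n)%N by move: hn; lia.
  exists n.*2; split; first by move: nN; lia.
  have b1 : (1 <= b n.*2)%N.
    apply: leq_trans (hab n); rewrite muln_gt0 /=; exact: a1.
  have n2' : (1 < n.*2)%N by move: n2; lia.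
  rewrite gkt_val // lee_fin.
  move: hyn; rewrite gkt_val // lte_fin.
  have Ln0 := ln_nat_gt0 _ n2.
  set Ln := ln (R:=R) n%:R.
  have e2 : ln (R:=R) (n.*2)%:R = (ln (R:=R) 2%:R + Ln)%R.
    by rewrite -mul2n ln_natM // ltnW.
  have hb : (Ln + ln (R:=R) (a n)%:R <= ln (R:=R) (b n.*2)%:R)%R.
    have h1 : (0 < n.+1 * a n)%N by rewrite muln_gt0 /= a1.
    apply: le_trans (ln_nat_le _ _ h1 (hab n)).
    rewrite ln_natM // lerD2r; apply: ln_nat_le => //; exact: ltnW.
  set q := (ln (R:=R) (a n)%:R / Ln)%R => hyq.
  have qE : ln (R:=R) (a n)%:R = (q * Ln)%R by rewrite /q divfK // gt_eqF.
  have hN := HN1 _ nN1; rewrite -/Ln in hN.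
  have hN' : (z * ln (R:=R) 2%:R <= eta * Ln)%R.
    by move: hN; rewrite ler_pdivrMr // [X in (_ <= X)%R -> _]mulrC.
  have yq : (y * Ln <= q * Ln)%R by rewrite ler_pM2r //; exact: ltW.
  rewrite ler_pdivlMr e2; last by rewrite -e2; exact: ln_nat_gt0.
  rewrite qE in hb; rewrite /eta in hN'; nra.
move: CL L0; case: (limn_esup (gkt a)) => [l| |] CL L0.
- apply/lee_subgt0Pr => e e0.
  have -> : l%:E + 1%:E - e%:E = (l + 1 - e)%:E by [].
  by apply: CL; rewrite lte_fin; lra.
- suff -> : limn_esup (gkt b) = +oo by [].
  by apply: eq_infty => r; apply: CL; rewrite ltry.
- by [].
Qed.

Lemma gk_upper (a b : nat -> nat) K : (forall n, (1 <= a n)%N) ->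
  (forall n, (b n <= a (n * K.+1) * (2 * (n * K).+1))%N) ->
  limn_esup (gkt b) <= limn_esup (gkt a) + 1%:E.
Proof.
move=> a1 hab.
have L0 := limsup_gkt_ge0 _ a1.
move: L0; case E: (limn_esup (gkt a)) => [l| |] L0; last 2 first.
- by rewrite leey.
- by [].
rewrite lee_fin in L0.
apply/lee_addgt0Pr => eps eps0.
pose del := (eps / 2)%R.
have del0 : (0 < del)%R by rewrite /del; lra.
have [N0 HN0] : exists N0, forall n, (N0 <= n)%N -> gkt a n < (l + del)%:E.
  apply: limsup_lt; rewrite E lte_fin; lra.
pose c := K.+1.
pose C := (ln (R:=R) (2 * c)%:R + (l + del) * ln (R:=R) c%:R)%R.
have [N2 HN2] := ln_big (C / del).
have -> : l%:E + 1%:E + eps%:E = (l + 1 + eps)%:E by [].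
apply: limsup_le; exists (maxn (maxn N0 N2) 2) => n hn.
have n2 : (1 < n)%N by move: hn; lia.
have nN0 : (N0 <= n)%N by move: hn; lia.
have nN2 : (N2 <= n)%N by move: hn; lia.
case: (posnP (b n)) => bn.
  by rewrite /gkt n2 bn eqxx leNye.
rewrite gkt_val //.
rewrite lee_fin.
have Ln0 := ln_nat_gt0 _ n2.
set Ln := ln (R:=R) n%:R.
have c0 : (0 < c)%N by [].
have cn2 : (1 < n * c)%N by rewrite /c mulnS; move: n2; lia.
have ha := HN0 _ (leq_trans nN0 (leq_pmulr _ c0)).
rewrite gkt_val // lte_fin in ha.
have Lcn0 := ln_nat_gt0 _ cn2.
rewrite ltr_pdivrMr // in ha.
have ecn : ln (R:=R) (n * c)%:R = (ln (R:=R) c%:R + Ln)%R.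
  by rewrite mulnC ln_natM //; move: n2; lia.
have e2cn : ln (R:=R) (2 * c * n)%:R = (ln (R:=R) (2 * c)%:R + Ln)%R.
  by rewrite ln_natM //; move: n2; lia.
have hb : (ln (R:=R) (b n)%:R <=
    ln (R:=R) (a (n * c))%:R + ln (R:=R) (2 * c * n)%:R)%R.
  have h1 : (b n <= a (n * c) * (2 * c * n))%N.
    apply: leq_trans (hab n) _; rewrite leq_mul2l; apply/orP; right.
    rewrite /c; move: n2; lia.
  apply: le_trans (ln_nat_le _ _ bn h1) _.
  by rewrite ln_natM // !muln_gt0 c0 (ltnW n2).
have hN2 := HN2 _ nN2; rewrite -/Ln ler_pdivrMr // in hN2.
have lc0 : (0 <= ln (R:=R) c%:R)%R by apply: ln_nat_ge0.
rewrite ler_pdivrMr //.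
rewrite ecn in ha; rewrite e2cn in hb.
rewrite /C in hN2.
have epsE : eps = (2 * del)%R by rewrite /del; lra.
rewrite epsE.
move: ha hb hN2; clearbody del Ln; move=> ha hb hN2.
nra.
Qed.

End GKT.
Import Order.TTheory Num.Theory.
Local Open Scope classical_set_scope.

Theorem corollary3p3 (R : realType) (k : fieldType) (D : algType k) (a : D)
  (a_central : forall d : D, a * d = d * a) :
  GKdim_Dxy_mod R a = (GKdim R D + 1%:E)%E.
Proof.
rewrite /GKdim_Dxy_mod /GKdim /GKdim_quot.
have lowQ : forall s : seq D,
   (limn_esup (gk_term R (fun c : k => (c%:A)%R : D) (fun z : D => z = 0%R) s) + 1%:E <=
    limn_esup (gk_term R (fun c : k => ((c%:A : D)%:P%:P)%R : {poly {poly D}})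
       (ideal_gen (polyx D * polyy D - a%:P%:P)%R) (polyx D :: map (bet k D) s)))%E.
  move=> s; apply: (gk_lower R (fun n => dim_span_mod (f0 k D) (I0 k D) (words_upto s n))).
    by move=> n; apply: (dimD_pos k D a a_central).
  by move=> n; apply: (lowerQ k D a a_central).
have upQ : forall s' : seq {poly {poly D}},
   (limn_esup (gk_term R (fun c : k => ((c%:A : D)%:P%:P)%R : {poly {poly D}})
       (ideal_gen (polyx D * polyy D - a%:P%:P)%R) s') <=
    limn_esup (gk_term R (fun c : k => (c%:A)%R : D) (fun z : D => z = 0%R) (sU k D a s')) + 1%:E)%E.
  move=> s'; apply: (gk_upper R _ _ (KU k D s')).
    by move=> n; apply: (dimD_pos k D a a_central).
  by move=> n; apply: (upperQ k D a a_central).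
apply/eqP; rewrite eq_le; apply/andP; split.
  apply: ge_ereal_sup => _ [s' _ <-].
  apply: le_trans (upQ s') _; apply: leeD2r; apply: ereal_sup_ubound.
  by exists (sU k D a s').
have H : forall s : seq D,
   (limn_esup (gk_term R (fun c : k => (c%:A)%R : D) (fun z : D => z = 0%R) s) + 1%:E <=
    ereal_sup [set limn_esup (gk_term R (fun c : k => ((c%:A : D)%:P%:P)%R : {poly {poly D}})
       (ideal_gen (polyx D * polyy D - a%:P%:P)%R) s') | s' in [set: seq {poly {poly D}}]])%E.
  move=> s; apply: le_trans (lowQ s) _; apply: ereal_sup_ubound.
  by exists (polyx D :: map (bet k D) s).
have H0 : forall s : seq D,
   (0 <= limn_esup (gk_term R (fun c : k => (c%:A)%R : D) (fun z : D => z = 0%R) s))%E.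
  move=> s; apply: (limsup_gkt_ge0 R (fun n => dim_span_mod (f0 k D) (I0 k D) (words_upto s n))).
  by move=> n; apply: (dimD_pos k D a a_central).
move: H; case: (ereal_sup _) => [q| |] H; last 2 first.
- by rewrite leey.
- move: (H [::]) (H0 [::]); case: (limn_esup _) => [x| |] //.
have hSD : (ereal_sup [set limn_esup (gk_term R (fun c : k => (c%:A)%R : D)
     (fun z : D => z = 0%R) s) | s in [set: seq D]] <= (q - 1)%:E)%E.
  apply: ge_ereal_sup => _ [s _ <-].
  move: (H s); case: (limn_esup _) => [x| |] //.
    by rewrite -EFinD !lee_fin => h; lra.
  by move=> _; rewrite leNye.
apply: le_trans (leeD2r _ hSD) _.
by rewrite -EFinD lee_fin subrK.
Qed.
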